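(* Let $G=(V,E)$ be a directed graph, $s\neq t$ vertices and $k\ge 5$ an integer. For each $w\in D$ let $\widehat{In}_D(w)$ be any subset of $In_D(w)$ of size $k-2$ if $|In_D(w)|>k-2$, and $\widehat{In}_D(w)=In_D(w)$ otherwise. Let $e(u,v)$ be an undetermined edge. Then $e(u,v)$ is an edge of $SPG_k(s,t)$ if and only if there exist an integer $l$ and vertices $v_2,\dots,v_{l-2}$ forming a simple path $q^*$ in $G$ of length $l-4\le k-4$ having $e(u,v)$ as one of its edges, such that (1) $v_2\in D$ and $v_{l-2}\in A$; and (2) there exist $v_1\in \widehat{In}_D(v_2)$ and $v_{l-1}\in Out_A(v_{l-2})$ such that $s,v_1,v_2,\dots,v_{l-1},t$ are pairwise distinct.
   Context: A path from $x$ to $y$ in $G$ is a vertex sequence $x=v_0,\dots,v_m=y$ with $(v_{i-1},v_i)\in E$; its length is $m$ and $V(p)$, $E(p)$ are its vertex and edge sets. A simple path has no repeated vertex. $SPG_k(s,t)$ is the subgraph of $G$ formed by the union of vertex sets and edge sets of all simple paths from $s$ to $t$ of length at most $k$. For a vertex $u$ and integer $l\ge 0$, $EV^*_l(s,u)$ exists iff there is at least one simple path from $s$ to $u$ of length at most $l$ not containing $t$, and then $EV^*_l(s,u)$ is the intersection of $V(p)$ over all such paths. Symmetrically, $EV^*_l(v,t)$ exists iff there is at least one simple path from $v$ to $t$ of length at most $l$ not containing $s$, and then it is the intersection of $V(p)$ over all such paths. The upper-bound graph $SPG^u_k(s,t)$ is the subgraph of $G$ whose edges are exactly those $e(u,v)\in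 E$ for which there exist integers $k_f,k_b\ge 0$ with $EV^*_{k_f}(s,u)$ and $EV^*_{k_b}(v,t)$ existing, $k_f+1+k_b\le k$, and $EV^*_{k_f}(s,u)\cap EV^*_{k_b}(v,t)=\emptyset$. An edge $e(u,v)\in E$ is definite if one of: (a) $u=s$ and $EV^*_{k-1}(v,t)$ exists; (b) $v=t$ and $EV^*_{k-1}(s,u)$ exists; (c) $EV^*_1(s,u)$ and $EV^*_{k-2}(v,t)$ exist and $u\notin EV^*_{k-2}(v,t)$; (d) $EV^*_1(v,t)$ and $EV^*_{k-2}(s,u)$ exist and $v\notin EV^*_{k-2}(s,u)$. An undetermined edge is an edge of $SPG^u_k(s,t)$ that is not definite. The departure set $D$ consists of vertices $w$ having an in-neighbour $x$ such that $x,w,s,t$ are pairwise distinct and $e(s,x),e(x,w)$ are edges of $SPG^u_k(s,t)$; for $w\in D$, $In_D(w)$ is the set of all such $x$. The arrival set $A$ consists of vertices $w$ having an out-neighbour $y$ such that $w,y,s,t$ are pairwise distinct and $e(w,y),e(y,t)$ are edges of $SPG^u_k(s,t)$; for $w\in A$, $Out_A(w)$ is the set of all such $y$. *)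

(* Defs.v *)
From mathcomp Require Import all_boot.
From mathcomp Require Import boolp.
Set Implicit Arguments. Unset Strict Implicit. Unset Printing Implicit Defensive.

(* A path x = v_0, ..., v_m = y is represented by the sequence x :: p with
   path E x p and last x p = y; its length is size p; V(p) = x :: p and
   its edges are the consecutive pairs of x :: p. *)

Section Defs.
Variables (T : finType) (E : rel T).

Definition spath (x y : T) (p : seq T) : bool :=
  [&& path E x p, last x p == y & uniq (x :: p)].

Definition sp_le (avoid : T) (l : nat) (x y : T) (p : seq T) : Prop :=
  [/\ spath x y p, size p <= l & avoid \notin x :: p].

Definition EV_ex (avoid : T) (l : nat) (x y : T) : Prop :=
  exists p, sp_le avoid l x y p.

(* w belongs to EV*_l(x,y): w lies on every such path *)
Definition EV_mem (avoid : T) (l : nat) (x y w : T) : Prop :=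
  forall p, sp_le avoid l x y p -> w \in x :: p.

Variables (s t : T) (k : nat).

Definition EVf_ex l u := EV_ex t l s u.
Definition EVf_mem l u w := EV_mem t l s u w.
Definition EVb_ex l v := EV_ex s l v t.
Definition EVb_mem l v w := EV_mem s l v t w.

Definition SPG_edge (u v : T) : Prop :=
  exists p, [/\ spath s t p, size p <= k & infix [:: u; v] (s :: p)].

Definition SPGu_edge (u v : T) : Prop :=
  E u v /\ exists kf kb,
    [/\ EVf_ex kf u, EVb_ex kb v, kf + 1 + kb <= k &
        ~ exists w, EVf_mem kf u w /\ EVb_mem kb v w].

Definition definite_edge (u v : T) : Prop :=
  E u v /\
  [\/ u = s /\ EVb_ex k.-1 v,
      v = t /\ EVf_ex k.-1 u,
      [/\ EVf_ex 1 u, EVb_ex (k - 2) v & ~ EVb_mem (k - 2) v u]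
    | [/\ EVb_ex 1 v, EVf_ex (k - 2) u & ~ EVf_mem (k - 2) u v]].

Definition undetermined_edge (u v : T) : Prop :=
  SPGu_edge u v /\ ~ definite_edge u v.

Definition InD_rel (w x : T) : Prop :=
  E x w /\ uniq [:: x; w; s; t] /\ SPGu_edge s x /\ SPGu_edge x w.

Definition in_D (w : T) : Prop := exists x, InD_rel w x.

Definition InD (w : T) : {set T} := [set x | `[< InD_rel w x >]].

Definition OutA_rel (w y : T) : Prop :=
  E w y /\ uniq [:: w; y; s; t] /\ SPGu_edge w y /\ SPGu_edge y t.

Definition in_A (w : T) : Prop := exists y, OutA_rel w y.

Definition OutA (w : T) : {set T} := [set y | `[< OutA_rel w y >]].

End Defs.

(* Main.v *)
Require Import Defs.
From mathcomp Require Import all_boot.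
From mathcomp Require Import boolp.
From mathcomp Require Import zify.
Set Implicit Arguments. Unset Strict Implicit. Unset Printing Implicit Defensive.

Section Helpers.
Variables (T : finType) (E : rel T) (s t : T) (k : nat).

Lemma path_suffix (x : T) p a z b : x :: p = a ++ z :: b -> path E x p -> path E z b.
Proof.
case: a => [|a0 a'] /= [-> ->] //.
by rewrite cat_path => /andP[_] /= /andP[_].
Qed.

Lemma last_suffix (x : T) p a z b : x :: p = a ++ z :: b -> last x p = last z b.
Proof.
case: a => [|a0 a'] /= [-> ->] //.
by rewrite last_cat.
Qed.

Lemma suffix_sp p a z b : spath E s t p -> s :: p = a ++ z :: b -> a != [::] ->
  sp_le E s (size b) z t b.
Proof.
move=> /and3P[Pp Lp Up] eL Ha.
have U := Up; rewrite eL in U.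
split => //.
- apply/and3P; split.
  + exact: path_suffix eL Pp.
  + by rewrite -(last_suffix eL).
  + by move: U; rewrite cat_uniq => /and3P[_ _].
- case: a eL Ha U => [//|a0 a'] [<- _] _.
  rewrite cat_uniq => /and3P[_ /hasPn H _].
  apply/negP => Hs; move: (H s Hs); by rewrite inE eqxx.
Qed.

Lemma prefix_sp p a y c : spath E s t p -> s :: p = a ++ y :: c -> c != [::] ->
  exists q, [/\ rcons a y = s :: q, size q = size a & sp_le E t (size a) s y q].
Proof.
move=> /and3P[Pp Lp Up] eL Hc.
have tc : t \in c.
  rewrite -(eqP Lp) (last_suffix eL); case: c Hc {eL} => [//|c0 c'] _ /=.
  exact: mem_last.
have U := Up; rewrite eL -cat_rcons cat_uniq in U.
case/and3P: U => U1 /hasPn H _.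
have tn : t \notin rcons a y by exact: H.
case: a eL U1 H tn => [|a0 a'] /= [e1 e2] U1 H tn.
- subst y; exists [::]; split => //.
  by split => //; rewrite /spath /= eqxx.
- subst a0; exists (rcons a' y); split => //; first by rewrite size_rcons.
  split => //; last by rewrite size_rcons.
  apply/and3P; split => //; last by rewrite last_rcons.
  move: Pp; rewrite e2 cat_path rcons_path => /andP[-> /=] /andP[-> _] //.
Qed.

Lemma spg_SPGu p a y z b : spath E s t p -> size p <= k ->
  s :: p = a ++ y :: z :: b -> SPGu_edge E s t k y z.
Proof.
move=> sp Hk eL.
have e2 : s :: p = rcons a y ++ z :: b by rewrite cat_rcons.
split.
  case/and3P: sp => Pp _ _.
  by have /= /andP[] := path_suffix eL Pp.
have [q [eaq sq spq]] := prefix_sp sp eL isT.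
have spb : sp_le E s (size b) z t b.
  by apply: (suffix_sp sp e2); case: (a).
exists (size a), (size b); split.
- by exists q.
- by exists b.
- have := congr1 size eL; rewrite /= size_cat /= => Hs.
  move: Hk; have -> : size p = size a + 1 + size b.
    by lia.
  done.
- case=> w [Hf Hb].
  have wf := Hf q spq; have wb := Hb b spb.
  case/and3P: sp => _ _ U; rewrite e2 cat_uniq eaq in U.
  case/and3P: U => _ /hasPn H _.
  by move: (H w wb); rewrite wf.
Qed.

Lemma sp_le_mono av l l' (x y : T) p : sp_le E av l x y p -> size p <= l' -> sp_le E av l' x y p.
Proof. by case=> a _ c d; split. Qed.

Lemma uniq4 (a b c d : T) : uniq [:: a; b; c; d] -> uniq [:: b; c; a; d].
Proof.
have P : perm_eq [:: a; b; c; d] [:: b; c; a; d].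
  by apply: permEl; exact: (perm_catCA [:: a] [:: b; c] [:: d]).
by rewrite (perm_uniq P).
Qed.

Lemma backward (hatIn : T -> {set T}) u v : 5 <= k ->
  (forall w, in_D E s t k w ->
     [/\ hatIn w \subset InD E s t k w,
         (k - 2 < #|InD E s t k w| -> #|hatIn w| = k - 2) &
         (#|InD E s t k w| <= k - 2 -> hatIn w = InD E s t k w)]) ->
  (exists (x : T) (r : seq T),
     [/\ path E x r, uniq (x :: r), size r <= k - 4 &
         infix [:: u; v] (x :: r)] /\
     [/\ in_D E s t k x, in_A E s t k (last x r) &
         exists v1 vl,
           [/\ v1 \in hatIn x, vl \in OutA E s t k (last x r) &
               uniq (s :: v1 :: (x :: r) ++ [:: vl; t])]]) ->
  SPG_edge E s t k u v.
Proof.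
move=> k5 Hhat [x [r [[Pr Ur Sr /infixP [A [B eAB]]] [Dx Ax [v1 [vl [H1 H2 U]]]]]]].
have [Hsub _ _] := Hhat x Dx.
have := subsetP Hsub v1 H1; rewrite inE => /asboolP [Ev1 [_ [[Es1 _] _]]].
move: H2; rewrite inE => /asboolP [Evl [_ [_ [Evt _]]]].
exists (v1 :: (x :: r) ++ [:: vl; t]); split.
- apply/and3P; split => //.
  + rewrite /= Es1 Ev1 cat_path Pr /= Evl Evt; by [].
  + by rewrite /= last_cat /=.
- move: Sr; rewrite /= size_cat /=; lia.
- apply/infixP; exists (s :: v1 :: A), (B ++ [:: vl; t]).
  by rewrite eAB /= -!catA.
Qed.

Lemma split_last2 (a b : T) (l : seq T) : exists (l' : seq T) (c d : T), a :: b :: l = l' ++ [:: c; d].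
Proof.
elim/last_ind: l a b => [|l x IH] a b; first by exists [::], a, b.
have [l' [c [d e]]] := IH a b.
exists (rcons l' c), d, x.
change (a :: b :: rcons l x) with (rcons (a :: b :: l) x).
by rewrite e -!cats1 -!catA.
Qed.

Lemma forward (hatIn : T -> {set T}) u v : 5 <= k ->
  (forall w, in_D E s t k w ->
     [/\ hatIn w \subset InD E s t k w,
         (k - 2 < #|InD E s t k w| -> #|hatIn w| = k - 2) &
         (#|InD E s t k w| <= k - 2 -> hatIn w = InD E s t k w)]) ->
  undetermined_edge E s t k u v -> SPG_edge E s t k u v ->
  (exists (x : T) (r : seq T),
     [/\ path E x r, uniq (x :: r), size r <= k - 4 &
         infix [:: u; v] (x :: r)] /\
     [/\ in_D E s t k x, in_A E s t k (last x r) &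
         exists v1 vl,
           [/\ v1 \in hatIn x, vl \in OutA E s t k (last x r) &
               uniq (s :: v1 :: (x :: r) ++ [:: vl; t])]]).
Proof.
move=> k5 Hhat [Hu Hnd] [p [sp Hk /infixP [A [B eL]]]].
rewrite /= in eL.
have Hsz : size p = size A + 1 + size B.
  have := congr1 size eL; rewrite /= size_cat /=; lia.
have U : uniq (A ++ u :: v :: B) by case/and3P: sp => _ _; rewrite eL.
have Lt : last s p = t by case/and3P: sp => _ /eqP.
case: B eL Hsz U => [|b2 [|b2' B0]] eL Hsz U.
- (* v = t *)
  rewrite /= in Hsz.
  exfalso; apply: Hnd; split; first exact: Hu.1.
  apply: Or42; split.
    by rewrite -Lt (last_suffix (a := rcons A u) (z := v) (b := [::])) // cat_rcons.
  have [q [_ sq spq]] := prefix_sp sp eL isT.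
  exists q; apply: (sp_le_mono spq); rewrite sq -subn1; lia.
-
  rewrite /= in Hsz.
  have eL2 : s :: p = rcons A u ++ v :: [:: b2] by rewrite cat_rcons.
  exfalso; apply: Hnd; split; first exact: Hu.1.
  apply: Or44; split.
  + exists [:: b2]; apply: (suffix_sp sp eL2); by case: (A).
  + have [q [_ sq spq]] := prefix_sp sp eL isT.
    exists q; apply: (sp_le_mono spq); rewrite sq; lia.
  + move=> Hm.
    have [q [eaq sq spq]] := prefix_sp sp eL isT.
    have := Hm q (sp_le_mono (l' := k - 2) spq ltac:(rewrite sq; lia)).
    rewrite -eaq => Hv.
    by move: U; rewrite -cat_rcons cat_uniq => /and3P[_ /hasPn /(_ v) /=]; rewrite inE eqxx Hv => /(_ isT).
have [B' [b1 [b3 eB]]] := split_last2 b2 b2' B0.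
move: eL Hsz U; rewrite eB; move eBd : (B' ++ [:: b1; b3]) => B eL Hsz U.
have hB : size B = size B' + 2 by rewrite -eBd size_cat.
case: A eL Hsz U => [|a0 [|a1 A']] eL Hsz U.
- exfalso; apply: Hnd; split; first exact: Hu.1.
  case: eL => eu ep; apply: Or41; split => //.
  exists B; apply: (sp_le_mono (suffix_sp (a := [:: u]) sp _ isT)).
    by rewrite ep eu.
  move: Hsz => /=; rewrite -subn1; lia.
- exfalso; apply: Hnd; split; first exact: Hu.1.
  have eL2 : s :: p = [:: a0; u] ++ v :: B by [].
  have spB := suffix_sp sp eL2 isT.
  apply: Or43; split.
  + have [q [_ sq spq]] := prefix_sp sp eL isT.
    by exists q.
  + exists B; apply: (sp_le_mono spB); move: Hsz => /=; lia.
  + move=> Hm; have := Hm B (sp_le_mono (l' := k - 2) spB ltac:(move: Hsz => /=; lia)).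
    by move: U => /= /andP[_ /andP[/negP H _]].
case: eL => _ ep.
have [x [r eM]] : exists x r, A' ++ u :: v :: B' = x :: r.
  by case: (A') => [|y A'']; do 2 eexists.
have eL' : s :: p = s :: a1 :: (x :: r) ++ [:: b1; b3].
  by rewrite ep -eM -eBd -catA.
have eb3 : b3 = t.
  move: Lt; rewrite (last_suffix (a := s :: a1 :: (x :: r) ++ [:: b1]) (z := b3) (b := [::])) //.
  by rewrite eL' /= -catA.
subst b3.
have Hr : size r <= k - 4.
  have := congr1 size eL'; rewrite /= size_cat /= => hh; lia.
have UL : uniq (s :: a1 :: (x :: r) ++ [:: b1; t]) by case/and3P: sp => _ _; rewrite -eL'.
have eL3 : s :: a1 :: (x :: r) ++ [:: b1; t] = (s :: a1 :: belast x r) ++ [:: last x r; b1; t].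
  by rewrite (lastI x r) cat_rcons.
have S1 : SPGu_edge E s t k s a1 by apply: (spg_SPGu (a := [::]) sp Hk); exact: eL'.
have S2 : SPGu_edge E s t k a1 x by apply: (spg_SPGu (a := [:: s]) sp Hk); exact: eL'.
have S3 : SPGu_edge E s t k (last x r) b1.
  by apply: (spg_SPGu (a := s :: a1 :: belast x r) sp Hk); rewrite eL' eL3.
have S4 : SPGu_edge E s t k b1 t.
  by apply: (spg_SPGu (a := s :: a1 :: x :: r) (b := [::]) sp Hk); exact: eL'.
have ID : InD_rel E s t k x a1.
  split; first exact: S2.1.
  split=> //; apply: uniq4; apply: (subseq_uniq _ UL).
  apply: (cat_subseq (subseq_refl [:: s; a1; x])).
  by rewrite sub1seq mem_cat !inE eqxx !orbT.
have OA : OutA_rel E s t k (last x r) b1.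
  split; first exact: S3.1.
  split=> //; apply: uniq4; apply: (subseq_uniq _ UL); rewrite eL3.
  exact: (cat_subseq (subseq_refl [:: s]) (suffix_subseq (a1 :: belast x r) [:: last x r; b1; t])).
have Dx : in_D E s t k x by exists a1.
have [Hsub Hbig Hsmall] := Hhat x Dx.
have [v1 [Hv1 Fv1]] : exists v1, v1 \in hatIn x /\ v1 \notin r ++ [:: b1].
  case: (leqP #|InD E s t k x| (k - 2)) => Hc.
    exists a1; rewrite (Hsmall Hc) inE; split; first by apply/asboolP.
    have UL2 : a1 \notin (x :: r) ++ [:: b1; t] by case/andP: UL => _ /andP[].
    apply: contra UL2; rewrite !mem_cat !inE => /orP[->|->]; by rewrite ?orbT.
  have : ~~ (hatIn x \subset (r ++ [:: b1])).
    apply/negP => Hs; have := subset_leq_card Hs; rewrite (Hbig Hc).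
    have := card_size (r ++ [:: b1]); rewrite size_cat /=; move=> h1 h2; have := leq_trans h2 h1; move: Hr k5; clear; move: (size r) => n; lia.
  by case/subsetPn => v1 H1 H2; exists v1.
have := subsetP Hsub v1 Hv1; rewrite inE => /asboolP [_ [Uv _]].
exists x, r; split.
  split => //.
  - by case/and3P: sp => Pp _ _; move: Pp; case: (eL') => -> /= => /andP[_] /andP[_]; rewrite cat_path => /andP[].
  - apply: (subseq_uniq _ UL); apply: (subseq_trans (prefix_subseq (x :: r) [:: b1; t])).
    exact: (suffix_subseq [:: s; a1]).
  - by apply/infixP; exists A', B'; rewrite -eM.
split=> //; first by exists b1.
exists v1, b1; split => //; first by rewrite inE; apply/asboolP.
move: UL => /andP[]; rewrite inE negb_or => /andP[_ sR] /andP[_ uR].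
rewrite /= inE negb_or sR uR !andbT.
move: Uv; rewrite /= !inE !negb_or => /andP[/and3P[vx vs vt] _].
move: Fv1; rewrite mem_cat inE negb_or => /andP[vr vb].
by rewrite eq_sym vs /= mem_cat !inE !negb_or vx vr vb vt.
Qed.
End Helpers.

Unset Implicit Arguments.

Theorem theorem5p8 (T : finType) (E : rel T) (s t : T) (k : nat)
    (hatIn : T -> {set T}) :
  s != t -> 5 <= k ->
  (forall w, in_D E s t k w ->
     [/\ hatIn w \subset InD E s t k w,
         (k - 2 < #|InD E s t k w| -> #|hatIn w| = k - 2) &
         (#|InD E s t k w| <= k - 2 -> hatIn w = InD E s t k w)]) ->
  forall u v, undetermined_edge E s t k u v ->
  (SPG_edge E s t k u v <->
   exists (x : T) (r : seq T),
     [/\ path E x r, uniq (x :: r), size r <= k - 4 &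
         infix [:: u; v] (x :: r)] /\
     [/\ in_D E s t k x, in_A E s t k (last x r) &
         exists v1 vl,
           [/\ v1 \in hatIn x, vl \in OutA E s t k (last x r) &
               uniq (s :: v1 :: (x :: r) ++ [:: vl; t])]]).
Proof.
move=> _ k5 Hhat u v Hund; split.
- exact: forward k5 Hhat Hund.
- exact: backward k5 Hhat.
Qed.
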